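(* Let $T:X\rightrightarrows X^*$ be a pseudomonotone operator. Then $T$ is $D$-maximal pseudomonotone if and only if $\widehat{T}=(\widehat{T})^\rho_D$, i.e. $\widehat T$ coincides with the restriction of $(\widehat T)^\rho$ to $\mathrm{dom}(\widehat T)=\mathrm{dom}(T)$.
   Context: $X$ is a real Banach space with dual $X^*$ and pairing $\langle x,x^*\rangle=x^*(x)$. A multivalued operator $T:X\rightrightarrows X^*$ is identified with its graph $T\subset X\times X^*$; $T(x)=\{x^*:(x,x^* )\in T\}$, $\mathrm{dom}(T)=\{x:T(x)\ne\emptyset\}$, $Z_T=\{x:0\in T(x)\}$. For $A\subset X^*$, $\operatorname{cone}(A)=\{tv:t\ge0,v\in A\}$ and $\operatorname{cone}_\circ(A)=\{tv:t>0,v\in A\}$. For $C\subset X$, $N_C(x)=\{x^*: \langle y-x,x^*\rangle\le0\ \forall y\in C\}$. For $(x,x^* ),(y,y^* )\in X\times X^*$, write $(x,x^* )\sim_p(y,y^* )$ if either $\min\{\langle x-y,y^*\rangle,\langle y-x,x^*\rangle\}<0$ or $\langle x-y,y^*\rangle=\langle y-x,x^*\rangle=0$. The pseudomonotone polar is $T^\rho=\{(x,x^* ): (x,x^* )\sim_p(y,y^* )\ \forall (y,y^* )\in T\}$, and $T^\rho_D$ denotes the restriction of $T^\rho$ to $\mathrm{dom}(T)$ (i.e. $T^\rho_D(x)=T^\rho(x)$ if $x\in\mathrm{dom}(T)$, $\emptyset$ otherwise). $T$ is pseudomonotone if for all $(x,x^* ),(y,y^* )\in T$, $\langle y-x,x^*\rangle\ge0$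 implies $\langle y-x,y^*\rangle\ge0$. Two operators $T,S$ are equivalent if $\mathrm{dom}(T)=\mathrm{dom}(S)$, $Z_T=Z_S$ and $\operatorname{cone}(T(x))=\operatorname{cone}(S(x))$ for all $x\in\mathrm{dom}(T)\setminus Z_T$. $T$ is $D$-maximal pseudomonotone if $T$ is pseudomonotone and there is a pseudomonotone operator $S$ equivalent to $T$ which has no proper pseudomonotone extension with the same domain. For pseudomonotone $T$ and $x\in Z_T$, let $L(T,x)=\{y\in X:\exists y^*\in T(y),\ \langle x-y,y^*\rangle\ge0\}$, and define $\widehat T(x)=N_{L(T,x)}(x)$ if $x\in Z_T$, $\widehat T(x)=\operatorname{cone}_\circ(T(x))$ if $x\in\mathrm{dom}(T)\setminus Z_T$, and $\widehat T(x)=\emptyset$ if $x\notin\mathrm{dom}(T)$. (It is known, due to Hadjisavvas, that $\widehat T$ is pseudomonotone, equivalent to $T$, and is the largest pseudomonotone operator equivalent to $T$.) *)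

(* Defs.v *)
From Stdlib Require Import Reals.
Open Scope R_scope.

Record Banach := {
  vec :> Type;
  vzero : vec;
  vadd : vec -> vec -> vec;
  vopp : vec -> vec;
  vscal : R -> vec -> vec;
  vnorm : vec -> R;
  vadd_assoc : forall x y z, vadd x (vadd y z) = vadd (vadd x y) z;
  vadd_comm : forall x y, vadd x y = vadd y x;
  vadd_zero : forall x, vadd x vzero = x;
  vadd_opp : forall x, vadd x (vopp x) = vzero;
  vscal_assoc : forall a b x, vscal a (vscal b x) = vscal (a * b) x;
  vscal_one : forall x, vscal 1 x = x;
  vscal_distr_l : forall a x y, vscal a (vadd x y) = vadd (vscal a x) (vscal a y);
  vscal_distr_r : forall a b x, vscal (a + b) x = vadd (vscal a x) (vscal b x);
  vnorm_eq0 : forall x, vnorm x = 0 -> x = vzero;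
  vnorm_triangle : forall x y, vnorm (vadd x y) <= vnorm x + vnorm y;
  vnorm_scal : forall a x, vnorm (vscal a x) = Rabs a * vnorm x;
  vcomplete : forall u : nat -> vec,
    (forall eps, 0 < eps -> exists N, forall m n, (N <= m)%nat -> (N <= n)%nat ->
        vnorm (vadd (u m) (vopp (u n))) < eps) ->
    exists l, forall eps, 0 < eps -> exists N, forall n, (N <= n)%nat ->
        vnorm (vadd (u n) (vopp l)) < eps
}.

Definition vsub {X : Banach} (x y : X) : X := vadd X x (vopp X y).

Definition dual (X : Banach) : Type :=
  { f : X -> R |
    (forall x y, f (vadd X x y) = f x + f y) /\
    (forall a x, f (vscal X a x) = a * f x) /\
    (exists M, forall x, Rabs (f x) <= M * vnorm X x) }.

Definition pair {X : Banach} (x : X) (xs : dual X) : R := proj1_sig xs x.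

(** Multivalued operators identified with their graphs. *)
Definition op (X : Banach) := X -> dual X -> Prop.

Definition op_eq {X : Banach} (T S : op X) : Prop :=
  forall x xs, T x xs <-> S x xs.
Definition op_sub {X : Banach} (T S : op X) : Prop :=
  forall x xs, T x xs -> S x xs.

Definition dom {X : Banach} (T : op X) (x : X) : Prop := exists xs, T x xs.

Definition is_zero_dual {X : Banach} (xs : dual X) : Prop :=
  forall y : X, pair y xs = 0.

Definition zeros {X : Banach} (T : op X) (x : X) : Prop :=
  exists xs, T x xs /\ is_zero_dual xs.

(** cone(A) = {t v : t >= 0, v ∈ A}  (equality in X^* is pointwise) *)
Definition cone {X : Banach} (A : dual X -> Prop) (ys : dual X) : Prop :=
  exists t v, 0 <= t /\ A v /\ forall z, pair z ys = t * pair z v.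
Definition cone_pos {X : Banach} (A : dual X -> Prop) (ys : dual X) : Prop :=
  exists t v, 0 < t /\ A v /\ forall z, pair z ys = t * pair z v.

Definition normal_cone {X : Banach} (C : X -> Prop) (x : X) (xs : dual X) : Prop :=
  forall y, C y -> pair (vsub y x) xs <= 0.

Definition sim_p {X : Banach} (x : X) (xs : dual X) (y : X) (ys : dual X) : Prop :=
  Rmin (pair (vsub x y) ys) (pair (vsub y x) xs) < 0 \/
  (pair (vsub x y) ys = 0 /\ pair (vsub y x) xs = 0).

Definition polar {X : Banach} (T : op X) : op X :=
  fun x xs => forall y ys, T y ys -> sim_p x xs y ys.
Definition polar_D {X : Banach} (T : op X) : op X :=
  fun x xs => dom T x /\ polar T x xs.

Definition pseudomonotone {X : Banach} (T : op X) : Prop :=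
  forall x xs y ys, T x xs -> T y ys ->
    0 <= pair (vsub y x) xs -> 0 <= pair (vsub y x) ys.

Definition equivalent {X : Banach} (T S : op X) : Prop :=
  (forall x, dom T x <-> dom S x) /\
  (forall x, zeros T x <-> zeros S x) /\
  (forall x, dom T x -> ~ zeros T x ->
     forall ys, cone (T x) ys <-> cone (S x) ys).

Definition no_proper_pm_ext_same_dom {X : Banach} (S : op X) : Prop :=
  forall S', pseudomonotone S' -> op_sub S S' ->
    (forall x, dom S' x <-> dom S x) -> op_sub S' S.

Definition D_maximal_pseudomonotone {X : Banach} (T : op X) : Prop :=
  pseudomonotone T /\
  exists S, pseudomonotone S /\ equivalent T S /\ no_proper_pm_ext_same_dom S.

Definition Lset {X : Banach} (T : op X) (x : X) (y : X) : Prop :=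
  exists ys, T y ys /\ 0 <= pair (vsub x y) ys.

Definition hat {X : Banach} (T : op X) : op X :=
  fun x xs =>
    (zeros T x /\ normal_cone (Lset T x) x xs) \/
    (dom T x /\ ~ zeros T x /\ cone_pos (T x) xs).

(* Main.v *)
Require Import Defs.
From Stdlib Require Import Reals.
From Stdlib Require Import Lra Psatz Classical.
Open Scope R_scope.

Lemma vsub_sum (X : Banach) (x y : X) : vadd X (vsub x y) (vsub y x) = vzero X.
Proof.
  unfold vsub. rewrite vadd_assoc.
  rewrite <- (vadd_assoc X x (vopp X y) y).
  rewrite (vadd_comm X (vopp X y) y), vadd_opp, vadd_zero, vadd_opp. reflexivity.
Qed.

Lemma pz (X : Banach) (f : dual X) : pair (vzero X) f = 0.
Proof.
  unfold pair; destruct f as [g [Hadd Hrest]]; simpl.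
  pose proof (Hadd (vzero X) (vzero X)) as H.
  rewrite (vadd_zero X (vzero X)) in H. lra.
Qed.

Lemma pneg (X : Banach) (x y : X) (f : dual X) :
  pair (vsub x y) f = - pair (vsub y x) f.
Proof.
  pose proof (pz X f) as H0. rewrite <- (vsub_sum X x y) in H0.
  destruct f as [g [Hadd Hrest]]; unfold pair in *; simpl in *.
  rewrite Hadd in H0. lra.
Qed.

Lemma pself (X : Banach) (x : X) (f : dual X) : pair (vsub x x) f = 0.
Proof. unfold vsub. rewrite vadd_opp. apply pz. Qed.

Lemma pm_sim (X : Banach) (T : op X) x xs y ys :
  pseudomonotone T -> T x xs -> T y ys -> sim_p x xs y ys.
Proof.
  intros pm Tx Ty. unfold sim_p.
  pose proof (pm x xs y ys Tx Ty) as H1.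
  pose proof (pm y ys x xs Ty Tx) as H2.
  rewrite (pneg X y x ys) in H1. rewrite (pneg X x y xs) in H2.
  destruct (Rlt_or_le (pair (vsub x y) ys) 0) as [a|a].
  - left. eapply Rle_lt_trans; [apply Rmin_l|exact a].
  - destruct (Rlt_or_le (pair (vsub y x) xs) 0) as [b|b].
    + left. eapply Rle_lt_trans; [apply Rmin_r|exact b].
    + right. specialize (H1 b). specialize (H2 a). lra.
Qed.

Lemma sim_pm (X : Banach) (T : op X) :
  (forall x xs y ys, T x xs -> T y ys -> sim_p x xs y ys) -> pseudomonotone T.
Proof.
  intros H x xs y ys Tx Ty Hb.
  destruct (Rlt_or_le (pair (vsub y x) ys) 0) as [c|c]; auto.
  exfalso. specialize (H x xs y ys Tx Ty). unfold sim_p in H.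
  rewrite (pneg X x y ys) in H.
  destruct H as [H|H].
  - unfold Rmin in H; destruct (Rle_dec _ _); lra.
  - lra.
Qed.

Lemma sim_sym (X : Banach) (x : X) xs y ys : sim_p x xs y ys -> sim_p y ys x xs.
Proof. unfold sim_p. rewrite Rmin_comm. tauto. Qed.

Lemma hat_pm (X : Banach) (T : op X) : pseudomonotone T -> pseudomonotone (hat T).
Proof.
  intros pm x xs y ys Hx Hy H.
  destruct Hy as [[Zy Ny] | [Dy [nZy [s [w [Hs [Tw Hw]]]]]]].
  - assert (Lset T y x) as HL.
    { destruct Hx as [[Zx Nx]|[Dx [nZx [t [v [Ht [Tv Hv]]]]]]].
      - destruct Zx as [z [Tz Zz]]. exists z. split; auto. rewrite Zz; lra.
      - exists v. split; auto. rewrite Hv in H. nra. }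
    specialize (Ny x HL). rewrite pneg in Ny. lra.
  - rewrite Hw. enough (0 <= pair (vsub y x) w) by nra.
    destruct Hx as [[Zx Nx]|[Dx [nZx [t [v [Ht [Tv Hv]]]]]]].
    + destruct Zx as [z [Tz Zz]]. apply (pm x z y w Tz Tw). rewrite Zz; lra.
    + apply (pm x v y w Tv Tw). rewrite Hv in H. nra.
Qed.

Lemma hat_equiv (X : Banach) (T : op X) : equivalent T (hat T).
Proof.
  split; [|split].
  - intros x; split.
    + intros [xs Hxs]. destruct (classic (zeros T x)) as [Z|nZ].
      * pose proof Z as [z [Tz Zz]]. exists z. left. split; [exact Z|].
        intros y _. rewrite Zz; lra.
      * exists xs. right. split; [exists xs; auto|split; auto].
        exists 1, xs. split; [lra|split; auto]. intros; ring.
    + intros [xs [[Z _]|[D _]]]; [destruct Z as [z [Tz _]]; exists z; auto|exact D].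
  - intros x; split.
    + intros Z. pose proof Z as [z [Tz Zz]]. exists z; split; auto.
      left; split; auto. intros y _; rewrite Zz; lra.
    + intros [xs [[[Z _]|[D [nZ [t [v [Ht [Tv Hv]]]]]]] Zxs]]; [exact Z|].
      exfalso; apply nZ. exists v; split; auto. intros y.
      specialize (Zxs y). unfold is_zero_dual in Zxs. rewrite Hv in Zxs.
      destruct (Rmult_integral _ _ Zxs); [lra|auto].
  - intros x Dx nZ ys; split.
    + intros [t [v [Ht [Tv Hv]]]]. exists t, v. split; auto. split; [|auto].
      right. split; auto. split; auto. exists 1, v. split; [lra|split; auto].
      intros; ring.
    + intros [t [u [Ht [Hu Hv]]]].
      destruct Hu as [[Z _]|[_ [_ [s [w [Hs [Tw Hw]]]]]]]; [contradiction|].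
      exists (t*s), w. split; [nra|split; auto]. intros z; rewrite Hv, Hw; ring.
Qed.

Lemma sub_hat (X : Banach) (T S : op X) :
  pseudomonotone S -> equivalent T S -> op_sub S (hat T).
Proof.
  intros pmS [Hdom [Hz Hc]] x xs Sx.
  assert (Dx : dom T x) by (apply Hdom; exists xs; auto).
  destruct (classic (zeros T x)) as [Zx|nZx].
  - left. split; auto. intros y [ys [Tys Hys]].
    rewrite pneg. enough (0 <= pair (vsub x y) xs) by lra.
    destruct (classic (zeros T y)) as [Zy|nZy].
    + destruct (proj1 (Hz y) Zy) as [z [Sz Zz]]. apply (pmS y z x xs Sz Sx).
      rewrite Zz; lra.
    + assert (Dy: dom T y) by (exists ys; auto).
      assert (Hcy : cone (T y) ys).
      { exists 1, ys. split; [lra|split; auto]. intros; ring. }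
      apply (Hc y Dy nZy) in Hcy. destruct Hcy as [t [w [Ht [Sw Hw]]]].
      destruct (Req_dec t 0) as [t0|t0].
      * exfalso. apply nZy. exists ys. split; auto. intros z. rewrite Hw, t0; ring.
      * apply (pmS y w x xs Sw Sx). rewrite Hw in Hys. nra.
  - right. split; auto. split; auto.
    assert (Hcx : cone (S x) xs).
    { exists 1, xs. split; [lra|split; auto]. intros; ring. }
    apply (Hc x Dx nZx) in Hcx. destruct Hcx as [t [v [Ht [Tv Hv]]]].
    destruct (Req_dec t 0) as [t0|t0].
    + exfalso. apply nZx. apply Hz. exists xs. split; auto.
      intros z. rewrite Hv, t0; ring.
    + exists t, v. split; [lra|split; auto].
Qed.

Theorem mainTheorem13 (X : Banach) (T : op X) :
  pseudomonotone T ->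
  (D_maximal_pseudomonotone T <-> op_eq (hat T) (polar_D (hat T))).
Proof.
  intros pmT. split.
  - intros [_ [S [pmS [eqTS maxS]]]]. intros x xs. split.
    + intros H. split; [exists xs; auto|]. intros y ys Hy.
      apply pm_sim with (hat T); auto using hat_pm.
    + intros [Dx Px].
      set (S' := fun y ys => hat T y ys \/ (y = x /\ ys = xs)).
      assert (pmS' : pseudomonotone S').
      { apply sim_pm. intros a as_ b bs [Ha|[-> ->]] [Hb|[-> ->]].
        - apply pm_sim with (hat T); auto using hat_pm.
        - apply sim_sym. apply Px; auto.
        - apply Px; auto.
        - right. rewrite pself. split; reflexivity. }
      assert (Hd : forall y, dom (hat T) y -> dom S y).
      { intros y Hy. apply (proj1 eqTS y). apply (proj1 (hat_equiv X T) y). exact Hy. }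
      assert (Hsub : op_sub S S').
      { intros a as_ Ha. left. apply (sub_hat X T S pmS eqTS). exact Ha. }
      assert (HdS : forall y, dom S' y <-> dom S y).
      { intros y; split.
        - intros [ys [Hy|[-> ->]]]; apply Hd; [exists ys; auto|exact Dx].
        - intros [ys Hy]. exists ys. apply Hsub. exact Hy. }
      apply (sub_hat X T S pmS eqTS).
      apply (maxS S' pmS' Hsub HdS). right; auto.
  - intros Heq. split; auto. exists (hat T).
    split; [apply hat_pm; auto|split; [apply hat_equiv|]].
    intros S' pmS' sub domS' x xs S'x. apply Heq. split.
    + apply domS'; exists xs; auto.
    + intros y ys Hy. apply pm_sim with S'; auto.
Qed.
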